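(* Let $n\ge 2$ and let $G$ be a complete $n$-partite graph whose vertex set is partitioned into partite sets $V_1,\dots,V_n$ with $a_i=|V_i|\ge 1$ for each $i$. Then $$\tau(G)=\frac12\left[\left(\sum_{i=1}^n a_i\right)^2-\sum_{i=1}^n a_i^2\right],$$ and for $v\in V_j$, $TDV(v)=\left(\sum_{i=1}^n a_i\right)-a_j$.
   Context: A set $D \subseteq V(G)$ is a total dominating set of $G$ if every vertex of $G$ has a neighbor in $D$. $\gamma_t(G)$ is the minimum cardinality of a total dominating set; a minimum one is a $\gamma_t(G)$-set. $\tau(G)$ is the number of $\gamma_t(G)$-sets and $TDV(v)$ is the number of $\gamma_t(G)$-sets containing $v$. *)

(* Defs.v *)
From mathcomp Require Import all_boot all_order all_algebra.
Set Implicit Arguments. Unset Strict Implicit. Unset Printing Implicit Defensive.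

Definition is_tds (T : finType) (g : rel T) (D : {set T}) : bool :=
  [forall v, [exists u in D, g v u]].

(* gamma_t(G): minimum cardinality of a total dominating set
   (the default #|T| is only used when no TDS exists). *)
Definition gamma_t (T : finType) (g : rel T) : nat :=
  \big[minn/#|T|]_(D : {set T} | is_tds g D) #|D|.

Definition gt_sets (T : finType) (g : rel T) : {set {set T}} :=
  [set D : {set T} | is_tds g D & #|D| == gamma_t g].

Definition tau (T : finType) (g : rel T) : nat := #|gt_sets g|.

Definition TDV (T : finType) (g : rel T) (v : T) : nat :=
  #|[set D in gt_sets g | v \in D]|.

(* Complete n-partite graph with partite sets V_i = p^{-1}(i). *)
Definition complete_multipartite (T : finType) (n : nat) (p : T -> 'I_n) : rel T :=
  fun x y => p x != p y.

Definition part (T : finType) (n : nat) (p : T -> 'I_n) (i : 'I_n) : {set T} :=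
  [set v | p v == i].

(* Main.v *)
Require Import Defs.
From mathcomp Require Import all_boot all_order all_algebra.
Import GRing.Theory.
Local Open Scope ring_scope.

Lemma minle (I : eqType) (s : seq I) (F : I -> nat) m i :
  i \in s -> (\big[minn/m]_(j <- s) F j <= F i)%N.
Proof.
elim: s => //= j s IH; rewrite inE big_cons => /orP [/eqP ->|/IH h].
  exact: geq_minl.
exact: leq_trans (geq_minr _ _) h.
Qed.

Section S.
Variables (T : finType) (n : nat) (p : T -> 'I_n).
Hypothesis hn : (2 <= n)%N.
Hypothesis ha : forall i : 'I_n, (0 < #|part p i|)%N.
Local Notation G := (complete_multipartite p).

Lemma tds_ge2 D : is_tds G D -> (2 <= #|D|)%N.
Proof.
move=> /forallP H.
have [i0] : exists i : 'I_n, true by exists (Ordinal (ltnW hn)).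
move=> _; have /card_gt0P [v _] := ha i0.
have /existsP [u /andP [uD _]] := H v.
have /existsP [w /andP [wD puw]] := H u.
have uw : u != w by apply: contraNneq puw => ->.
have c2 : #|[set u; w]| = 2%N by rewrite cards2 uw.
rewrite -c2; apply: subset_leq_card.
by apply/subsetP => x; rewrite !inE => /orP [] /eqP ->.
Qed.

Lemma pair_tds x y : p x != p y -> is_tds G [set x; y].
Proof.
move=> pxy; apply/forallP => v; apply/existsP.
case: (eqVneq (p v) (p x)) => [e|ne].
  by exists y; rewrite !inE eqxx orbT /= /complete_multipartite e.
by exists x; rewrite !inE eqxx /= /complete_multipartite.
Qed.

Lemma exists_pair : exists x y, p x != p y.
Proof.
have h0 : (0 < n)%N by apply: leq_trans hn.
have h1 : (1 < n)%N by [].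
have /card_gt0P [x] := ha (Ordinal h0).
have /card_gt0P [y] := ha (Ordinal h1).
rewrite !inE => /eqP py /eqP px; exists x, y; by rewrite px py.
Qed.

Lemma gamma2 : gamma_t G = 2%N.
Proof.
have [x [y pxy]] := exists_pair.
have xy : x != y by apply: contraNneq pxy => ->.
apply/eqP; rewrite eqn_leq; apply/andP; split.
  rewrite /gamma_t -big_filter.
  have c2 : #|[set x; y]| = 2%N by rewrite cards2 xy.
  rewrite -[X in (_ <= X)%N]c2; apply: minle.
  by rewrite mem_filter pair_tds // mem_index_enum.
rewrite /gamma_t; apply: (big_ind (fun m => 2 <= m)%N).
- have c2 : #|[set x; y]| = 2%N by rewrite cards2 xy.
  rewrite -c2; exact: max_card.
- by move=> a b ha' hb; rewrite leq_min ha' hb.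
- by move=> D; apply: tds_ge2.
Qed.

Lemma gt_setsP (D : {set T}) (v : T) : v \in D ->
  (D \in gt_sets G) = [exists y, (p y != p v) && (D == [set v; y])].
Proof.
move=> vD; rewrite /gt_sets inE gamma2.
apply/andP/existsP.
  move=> [/forallP H /eqP cD].
  have /existsP [w /andP [wD pvw]] := H v.
  move: pvw; rewrite /complete_multipartite => pvw.
  exists w; rewrite eq_sym pvw /= eq_sym eqEcard cD cards2.
  have -> : v != w by apply: contraNneq pvw => ->.
  by rewrite leqnn andbT; apply/subsetP => z; rewrite !inE => /orP [] /eqP ->.
move=> [y /andP [pyv /eqP ->]]; split; first by apply: pair_tds; rewrite eq_sym.
rewrite cards2; have -> // : v != y by apply: contraNneq pyv => ->.
Qed.

Lemma TDVE v : TDV G v = (#|T| - #|part p (p v)|)%N.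
Proof.
rewrite /TDV.
have -> : [set D in gt_sets G | v \in D] =
          [set [set v; y] | y in [set y | p y != p v]].
  apply/setP => D; rewrite !inE; apply/andP/imsetP.
    move=> [Dg vD]; have Dg' : D \in gt_sets G by rewrite inE.
    move: Dg'; rewrite (gt_setsP _ _ vD) => /existsP [y /andP [pyv /eqP ->]].
    by exists y; rewrite ?inE.
  move=> [y]; rewrite inE => pyv ->; rewrite !inE eqxx; split=> //.
  suff : [set v; y] \in gt_sets G by rewrite inE.
  by rewrite (gt_setsP _ _ (setU11 _ _)); apply/existsP; exists y; rewrite pyv eqxx.
rewrite card_in_imset.
  rewrite -(cardC (part p (p v))); rewrite addKn; apply: eq_card => y.
  by rewrite !inE.
move=> y1 y2; rewrite !inE => p1 p2 e.
have : y1 \in [set v; y2] by rewrite -e !inE eqxx orbT.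
rewrite !inE; case/orP => /eqP h //.
by move: p1; rewrite h eqxx.
Qed.

Lemma cardT_sum : #|T| = (\sum_(i < n) #|part p i|)%N.
Proof.
rewrite -sum1_card (partition_big p predT) //=.
by apply: eq_bigr => i _; rewrite -sum1_card; apply: eq_bigl => v; rewrite !inE.
Qed.

Lemma sumTDV : (\sum_v TDV G v = 2 * tau G)%N.
Proof.
rewrite /TDV /tau.
have -> : (\sum_v #|[set D in gt_sets G | v \in D]| =
           \sum_v \sum_(D in gt_sets G) (v \in D : nat))%N.
  apply: eq_bigr => v _; set gt := gt_sets G.
  rewrite -sum1_card [LHS]big_mkcond [RHS]big_mkcond /=.
  by apply: eq_bigr => D _; rewrite !inE; case: (v \in D); rewrite ?andbT ?andbF //; by case: ifP.
rewrite (exchange_big _ _ _ predT (fun D => D \in gt_sets G)) /= mulnC -sum_nat_const; apply: eq_bigr => D.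
rewrite /gt_sets inE gamma2 => /andP [_ /eqP <-].
by rewrite -sum1_card [RHS]big_mkcond.
Qed.

End S.

Theorem proposition3p1 (T : finType) (n : nat) (p : T -> 'I_n)
  (hn : (2 <= n)%N) (ha : forall i : 'I_n, (0 < #|part p i|)%N) :
  let a := fun i : 'I_n => #|part p i| in
  let G := complete_multipartite p in
  ((tau G)%:R : rat) =
     2^-1 * (((\sum_(i < n) a i)%N)%:R ^+ 2 - \sum_(i < n) ((a i)%:R ^+ 2))
  /\ (forall (j : 'I_n) (v : T), v \in part p j ->
        TDV G v = ((\sum_(i < n) a i) - a j)%N).
Proof.
move=> a G; split; last first.
  move=> j v; rewrite inE => /eqP <-; rewrite TDVE // -cardT_sum //.
have e2 := @sumTDV T n p hn ha.
have : (2 * tau G = \sum_(i < n) a i * (\sum_(k < n) a k - a i))%N.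
  rewrite -e2 (partition_big p predT) //=; apply: eq_bigr => i _.
  rewrite (eq_bigr (fun _ => \sum_(k < n) a k - a i)%N).
    rewrite sum_nat_const; congr (_ * _)%N; rewrite /a; apply: eq_card => v.
    by rewrite !inE.
  by move=> v /eqP <-; rewrite TDVE // -cardT_sum.
move=> h0; have := congr1 (fun m => (m%:R : rat)) h0.
rewrite /= natrM natr_sum => h.
have -> : ((tau G)%:R : rat) = 2^-1 * (2 * (tau G)%:R) by rewrite mulrA mulVf ?mul1r.
congr (_ * _); rewrite h.
rewrite (eq_bigr (fun i => (a i)%:R * (\sum_(k < n) a k)%N%:R - (a i)%:R ^+ 2)); last first.
  move=> i _; rewrite natrM natrB; first by rewrite mulrBr expr2.
  by rewrite (bigD1 i) //= leq_addr.
by rewrite sumrB -mulr_suml -natr_sum expr2.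
Qed.
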